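(* Let $m,\ell\geq 2$ and let $n\ge 1$ be divisible by $\ell$. Then \[a_{2(\ell)}(n)=b_\ell(2n,n),\] and more generally \[a_{m(\ell)}(n)=a_{(m-1)(\ell)}(2n,n).\]
   Context: An $\ell$-regular partition is a partition with no part divisible by $\ell$. $a_{m(\ell)}(n)$ is the number of $\ell$-regular partitions of $n$ in which the smallest part occurs at least $m$ times. $a_{m(\ell)}(N,k)$ is the number of $\ell$-regular partitions of $N$ in which the smallest part occurs at least $m$ times and the largest part minus the smallest part equals $k$. $b_\ell(N,k)$ is the number of $\ell$-regular partitions of $N$ in which the largest part minus the smallest part equals $k$. *)

(* Defs.v *)
From mathcomp Require Import all_boot.
Set Implicit Arguments. Unset Strict Implicit. Unset Printing Implicit Defensive.

(* A partition of N is encoded by its multiplicity function: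
   f i = number of parts equal to i (for 0 <= i <= N); f 0 = 0 and
   \sum_i i * f i = N.  This is a bijective encoding of partitions of N. *)
Definition mfun (N : nat) := {ffun 'I_N.+1 -> 'I_N.+1}.

Definition is_partition (N : nat) (f : mfun N) : bool :=
  (f ord0 == 0 :> nat) && (\sum_(i < N.+1) i * f i == N).

Definition is_part (N : nat) (f : mfun N) (i : 'I_N.+1) : bool := 0 < f i.

Definition l_regular (l N : nat) (f : mfun N) : bool :=
  [forall i, is_part f i ==> ~~ (l %| i)].

Definition is_smallest_part (N : nat) (f : mfun N) (i : 'I_N.+1) : bool :=
  is_part f i && [forall j, is_part f j ==> (i <= j)].

Definition is_largest_part (N : nat) (f : mfun N) (i : 'I_N.+1) : bool :=
  is_part f i && [forall j, is_part f j ==> (j <= i)].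

Definition smallest_at_least (m N : nat) (f : mfun N) : bool :=
  [exists i, is_smallest_part f i && (m <= f i)].

Definition spread_eq (k N : nat) (f : mfun N) : bool :=
  [exists i, exists j, [&& is_smallest_part f i, is_largest_part f j
                         & (j - i == k)]].

Definition a_ml (m l n : nat) : nat :=
  #|[set f : mfun n | [&& is_partition f, l_regular l f & smallest_at_least m f]]|.

Definition a_mlk (m l N k : nat) : nat :=
  #|[set f : mfun N | [&& is_partition f, l_regular l f,
                          smallest_at_least m f & spread_eq k f]]|.

Definition b_lk (l N k : nat) : nat :=
  #|[set f : mfun N | [&& is_partition f, l_regular l f & spread_eq k f]]|.

(* Main.v *)
Require Import Defs.
From mathcomp Require Import all_boot zify.
Set Implicit Arguments. Unset Strict Implicit. Unset Printing Implicit Defensive.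

Definition E N (f : mfun N) (i : nat) : nat := if i < N.+1 then f (inord i) : nat else 0.
Arguments E : simpl never.

Lemma E_ord N (f : mfun N) (i : 'I_N.+1) : E f i = f i.
Proof. by rewrite /E ltn_ord inord_val. Qed.

Lemma E_out N (f : mfun N) i : N < i -> E f i = 0.
Proof. by move=> H; rewrite /E ltnNge H. Qed.

Lemma E_le N (f : mfun N) i : E f i <= N.
Proof. rewrite /E; case: ifP => // _; by rewrite -ltnS ltn_ord. Qed.

Lemma E_pos_lt N (f: mfun N) i : 0 < E f i -> i < N.+1.
Proof. by rewrite /E; case: ifP. Qed.

Lemma E_inj N (f g : mfun N) : (forall i, E f i = E g i) -> f = g.
Proof. move=> H; apply/ffunP => i; apply/val_inj; by rewrite /= -!E_ord H. Qed.

Definition mk N (G : nat -> nat) : mfun N := [ffun j : 'I_N.+1 => inord (G j)].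

Lemma E_mk N G : (forall i, G i <= N) -> (forall i, N < i -> G i = 0) ->
  forall i, E (mk N G) i = G i.
Proof.
move=> H1 H2 i; rewrite /E; case: ifP => Hi.
  by rewrite ffunE (inordK Hi) inordK // ltnS.
by rewrite H2 //; move/negbT: Hi; rewrite -leqNgt.
Qed.

Lemma partP N (f : mfun N) :
  reflect (E f 0 = 0 /\ \sum_(i < N.+1) i * E f i = N) (is_partition f).
Proof.
have HS : \sum_(i < N.+1) i * E f i = \sum_(i < N.+1) i * f i.
  by apply: eq_bigr => i _; rewrite E_ord.
rewrite /is_partition HS -[E f 0]/(E f (@ord0 N)) E_ord.
apply: (iffP andP).
  by case=> /eqP H1 /eqP H2.
by case=> -> ->; split.
Qed.

Lemma regP l N (f: mfun N) :
  reflect (forall i, 0 < E f i -> ~~ (l %| i)) (l_regular l f).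
Proof.
apply: (iffP forallP) => H.
  move=> i Hi; have Hi' := E_pos_lt Hi.
  by have := H (Ordinal Hi'); rewrite /is_part -E_ord /= Hi.
by move=> i; apply/implyP; rewrite /is_part -E_ord; exact: H.
Qed.

Definition smallestP (F : nat -> nat) s := 0 < F s /\ forall j, 0 < F j -> s <= j.
Definition largestP (F : nat -> nat) L := 0 < F L /\ forall j, 0 < F j -> j <= L.

Lemma smallP N (f : mfun N) (i : 'I_N.+1) : is_smallest_part f i <-> smallestP (E f) i.
Proof.
rewrite /is_smallest_part /is_part -E_ord; split.
  case/andP=> Hp /forallP H; split=> // j Hj; have Hj' := E_pos_lt Hj.
  by have := H (Ordinal Hj'); rewrite /is_part -E_ord /= Hj.
case=> Hp H; apply/andP; split => //; apply/forallP => j; apply/implyP.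
rewrite /is_part -E_ord; exact: H.
Qed.

Lemma largeP N (f : mfun N) (i : 'I_N.+1) : is_largest_part f i <-> largestP (E f) i.
Proof.
rewrite /is_largest_part /is_part -E_ord; split.
  case/andP=> Hp /forallP H; split=> // j Hj; have Hj' := E_pos_lt Hj.
  by have := H (Ordinal Hj'); rewrite /is_part -E_ord /= Hj.
case=> Hp H; apply/andP; split => //; apply/forallP => j; apply/implyP.
rewrite /is_part -E_ord; exact: H.
Qed.

Lemma salP m N (f : mfun N) :
  reflect (exists s, smallestP (E f) s /\ m <= E f s) (smallest_at_least m f).
Proof.
apply: (iffP existsP).
  by case=> i /andP[/smallP H1 H2]; exists i; rewrite E_ord.
case=> s [Hs Hm]; have Hs' := E_pos_lt Hs.1; exists (Ordinal Hs').
apply/andP; split; first exact/smallP.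
by rewrite -E_ord.
Qed.

Lemma spreadP k N (f : mfun N) :
  reflect (exists s L, [/\ smallestP (E f) s, largestP (E f) L & L - s = k])
    (spread_eq k f).
Proof.
apply: (iffP existsP).
  case=> i /existsP[j /and3P[/smallP H1 /largeP H2 /eqP H3]].
  by exists i, j.
case=> s [L [Hs HL Hk]]; have Hs' := E_pos_lt Hs.1; have HL' := E_pos_lt HL.1.
exists (Ordinal Hs'); apply/existsP; exists (Ordinal HL').
apply/and3P; split; [exact/smallP | exact/largeP | by apply/eqP].
Qed.

Lemma small_uniq F s s' : smallestP F s -> smallestP F s' -> s = s'.
Proof. move=> [H1 H2] [H3 H4]; apply/eqP; rewrite eqn_leq H2 // H4 //. Qed.

Definition sp N (f : mfun N) : nat :=
  if [pick i | is_smallest_part f i] is Some i then val i else 0.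

Lemma sp_eq N (f : mfun N) s : smallestP (E f) s -> sp f = s.
Proof.
move=> Hs; rewrite /sp; case: pickP => [i /smallP Hi | H].
  exact: small_uniq Hi Hs.
have Hs' := E_pos_lt Hs.1.
by have := proj2 (smallP f (Ordinal Hs')) Hs; rewrite H.
Qed.

Lemma sp_le N (f : mfun N) : sp f <= N.
Proof. rewrite /sp; case: pickP => // i _; by rewrite -ltnS ltn_ord. Qed.

Lemma sum_ext K1 K2 (F : nat -> nat) : K1 <= K2 -> (forall i, K1 <= i -> F i = 0) ->
  \sum_(i < K2) i * F i = \sum_(i < K1) i * F i.
Proof.
move=> Hk H; rewrite -!(big_mkord xpredT (fun i => i * F i)).
have Z : \sum_(K1 <= i < K2) i * F i = 0.
  rewrite big_nat_cond big1 // => i /andP[/andP[Hi _] _]; by rewrite H ?muln0.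
by rewrite (big_cat_nat (leq0n K1) Hk) /= Z addn0.
Qed.

Lemma sum_delta K c : c < K -> \sum_(i < K) i * (i == c :> nat) = c.
Proof.
move=> Hc; rewrite (bigD1 (Ordinal Hc)) //= eqxx muln1 big1 ?addn0 //.
move=> i Hi; suff -> : (nat_of_ord i == c) = false by rewrite muln0.
by apply/negbTE; apply: contra Hi => /eqP Hic; apply/eqP/val_inj.
Qed.

Lemma sum_one K a (F: nat->nat) : a < K -> a * F a <= \sum_(i < K) i * F i.
Proof. move=> Ha; rewrite (bigD1 (Ordinal Ha)) //=; exact: leq_addr. Qed.

Lemma sum_two K a b (F: nat->nat) : a < K -> b < K -> a != b ->
  a * F a + b * F b <= \sum_(i < K) i * F i.
Proof.
move=> Ha Hb Hab; rewrite (bigD1 (Ordinal Ha)) //= (bigD1 (Ordinal Hb)) //=; last first.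
  by apply: contra Hab => /eqP [->].
by rewrite addnA leq_addr.
Qed.

Lemma sum_D K (F G : nat -> nat) :
  \sum_(i < K) i * (F i + G i) = \sum_(i < K) i * F i + \sum_(i < K) i * G i.
Proof. by rewrite -big_split; apply: eq_bigr => i _; rewrite mulnDr. Qed.

Lemma card_bij (T U : finType) (A : {set T}) (B : {set U}) (f : T -> U) (g : U -> T) :
  {in A, forall x, f x \in B} -> {in B, forall y, g y \in A} ->
  {in A, cancel f g} -> {in B, cancel g f} -> #|A| = #|B|.
Proof.
move=> fAB gBA fK gK; apply/eqP; rewrite eqn_leq; apply/andP; split.
  rewrite -(card_in_imset (can_in_inj fK)); apply: subset_leq_card.
  by apply/subsetP => y /imsetP[x Hx ->]; exact: fAB.
rewrite -(card_in_imset (can_in_inj gK)); apply: subset_leq_card.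
by apply/subsetP => y /imsetP[x Hx ->]; exact: gBA.
Qed.

Section Main.
Variables m l n : nat.
Hypothesis Hm : 2 <= m.
Hypothesis Hn : 1 <= n.
Hypothesis Hln : l %| n.

Definition SA := [set f : mfun n | [&& is_partition f, l_regular l f & smallest_at_least m f]].
Definition SB := [set f : mfun (2*n) | [&& is_partition f, l_regular l f,
                          smallest_at_least (m-1) f & spread_eq n f]].

Definition Gf (f : mfun n) (j : nat) : nat :=
  if j == n + sp f then 1 else E f j - (j == sp f).
Definition phi (f : mfun n) : mfun (2*n) := mk (2*n) (Gf f).
Definition Kf (h : mfun (2*n)) (i : nat) : nat :=
  (if i == n + sp h then 0 else E h i) + (i == sp h).
Definition psi (h : mfun (2*n)) : mfun n := mk n (Kf h).

Lemma phiE f j : E (phi f) j = Gf f j.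
Proof.
apply: E_mk => i; rewrite /Gf; have Hs := sp_le f.
  case: ifP => _; first lia.
  have := E_le f i; lia.
move=> Hi; case: eqP => [?|_]; first lia.
by rewrite E_out ?sub0n //; lia.
Qed.

Lemma A_facts f : f \in SA -> exists s, [/\ sp f = s, smallestP (E f) s, 0 < s, s <= n &
   [/\ 2 <= E f s, m <= E f s, E f 0 = 0, \sum_(i < n.+1) i * E f i = n &
       forall i, 0 < E f i -> ~~ (l %| i)]].
Proof.
rewrite inE => /and3P[/partP[H0 Hsum] /regP Hreg /salP[s [Hs Hms]]].
exists s; have Hs1 : 0 < s.
  by case: (posnP s) Hs => // -> [] ; rewrite H0.
have := E_pos_lt Hs.1 => Hsn.
split => //; [exact: sp_eq | split => //; lia].
Qed.

Lemma phi_in f : f \in SA -> phi f \in SB.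
Proof.
case/A_facts=> s [Hsp Hs Hs1 Hsn [HFs Hms H0 Hsum Hreg]].
have HE j : E (phi f) j = if j == n + s then 1 else E f j - (j == s).
  by rewrite phiE /Gf Hsp.
have HsG : smallestP (E (phi f)) s.
  split.
    rewrite HE; case: eqP => [?|_]; first lia.
    by rewrite eqxx /=; lia.
  move=> j; rewrite HE; case: eqP => [->|_]; first lia.
  move=> Hj; apply: Hs.2; move: Hj; case: (j == s) => /=; lia.
rewrite inE; apply/and4P; split.
- apply/partP; split.
    rewrite HE; case: eqP => [?|_]; first lia.
    by rewrite H0 sub0n.
  pose G := fun j : nat => if j == n + s then 1 else E f j - (j == s).
  rewrite (eq_bigr (fun i : 'I_(2*n).+1 => i * G i)); last by move=> i _; rewrite HE.
  have key : forall i, G i + (i == s) = E f i + (i == n + s).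
    move=> i; rewrite /G; case: (eqVneq i (n+s)) => [->|Hi].
      rewrite /= E_out; last lia.
      case: eqP => ? /=; lia.
    rewrite /=; case: eqP => [->|?] /=; lia.
  have E1 : \sum_(i < (2*n).+1) i * (G i + (i == s :> nat)) = \sum_(i<(2*n).+1) i * G i + s.
    rewrite (sum_D _ G (fun i => (i == s :> nat))) sum_delta //; lia.
  have E2 : \sum_(i < (2*n).+1) i * (E f i + (i == n + s :> nat)) = n + (n + s).
    rewrite (sum_D _ (E f) (fun i => (i == n + s :> nat))) sum_delta; last lia.
    rewrite (@sum_ext n.+1) ?Hsum //; first lia.
    by move=> i Hi; rewrite E_out.
  have E3 : \sum_(i < (2*n).+1) i * (G i + (i == s :> nat)) =
            \sum_(i < (2*n).+1) i * (E f i + (i == n + s :> nat)).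
    by apply: eq_bigr => i _; rewrite key.
  apply/eqP; rewrite -(eqn_add2r s) -E1 E3 E2; apply/eqP; lia.
- apply/regP => j; rewrite HE; case: eqP => [-> _ | _ Hj].
    rewrite dvdn_addr //; exact: Hreg _ Hs.1.
  apply: Hreg; move: Hj; case: (j == s) => /=; lia.
- apply/salP; exists s; split => //.
  rewrite HE; case: eqP => [?|_]; first lia.
  by rewrite eqxx /=; lia.
- apply/spreadP; exists s, (n + s); split => //; last lia.
  split; first by rewrite HE eqxx.
  move=> j; rewrite HE; case: eqP => [->|_ Hj] //.
  have : 0 < E f j by move: Hj; case: (j == s) => /=; lia.
  move/E_pos_lt; lia.
Qed.

Lemma phi_sp f : f \in SA -> sp (phi f) = sp f.
Proof.
case/A_facts=> s [Hsp Hs Hs1 Hsn [HFs Hms H0 Hsum Hreg]].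
rewrite Hsp; apply: sp_eq.
have HE j : E (phi f) j = if j == n + s then 1 else E f j - (j == s).
  by rewrite phiE /Gf Hsp.
split.
  rewrite HE; case: eqP => [?|_]; first lia.
  by rewrite eqxx /=; lia.
move=> j; rewrite HE; case: eqP => [->|_]; first lia.
move=> Hj; apply: Hs.2; move: Hj; case: (j == s) => /=; lia.
Qed.

Lemma B_facts h : h \in SB -> exists s, [/\ sp h = s, smallestP (E h) s, 0 < s, s <= n &
   [/\ E h (n + s) = 1, forall j, n < j -> j != n + s -> E h j = 0,
       m - 1 <= E h s, E h 0 = 0 &
       [/\ \sum_(i < (2*n).+1) i * E h i = 2 * n,
           forall i, 0 < E h i -> ~~ (l %| i) &
           forall j, 0 < E h j -> j <= n + s]]].
Proof.
rewrite inE => /and4P[/partP[H0 Hsum] /regP Hreg /salP[s [Hs Hms]] /spreadP[s' [L [Hs' HL HLs]]]].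
have ? := small_uniq Hs' Hs; subst s'.
have Hs1 : 0 < s.
  by case: (posnP s) Hs => // -> [] ; rewrite H0.
have HsL := Hs.2 _ HL.1.
have HLe : L = n + s by lia.
subst L.
have HLb := E_pos_lt HL.1.
have HL1 : E h (n + s) = 1.
  have := @sum_two (2*n).+1 (n + s) s (E h) HLb ltac:(lia) ltac:(apply/eqP; lia).
  rewrite Hsum; have := HL.1; have := Hs.1; nia.
exists s; split => //; [exact: sp_eq | lia | split => //].
  move=> j Hj Hjn; case: (posnP (E h j)) => [//|Hp].
  have Hjb := E_pos_lt Hp.
  have := @sum_two (2*n).+1 j (n + s) (E h) Hjb HLb Hjn.
  rewrite Hsum HL1; nia.
split => //; exact: HL.2.
Qed.

Lemma psiE h : h \in SB -> forall i, E (psi h) i = Kf h i.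
Proof.
case/B_facts=> s [Hsp Hs Hs1 Hsn [HL1 Hz Hms H0 [Hsum Hreg Hlg]]].
have HLb : n + s < (2*n).+1 by lia.
apply: E_mk => i; rewrite /Kf Hsp.
  case: eqP => [_|Hi]; first by case: eqP => /=; lia.
  case: (leqP i n) => Hin; last first.
    rewrite Hz //; last exact/eqP.
    by case: eqP => /=; lia.
  case: eqP => [->|Hne] /=.
    have := @sum_two (2*n).+1 (n + s) s (E h) HLb ltac:(lia) ltac:(apply/eqP; lia).
    rewrite Hsum HL1; nia.
  case: (posnP (E h i)) => [->|Hp]; first lia.
  have Hi0 : 0 < i by case: (posnP i) Hp => // ->; rewrite H0.
  have := @sum_two (2*n).+1 i (n + s) (E h) ltac:(lia) HLb ltac:(apply/eqP; lia).
  rewrite Hsum HL1; nia.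
move=> Hi; case: eqP => [_|Hne].
  by case: eqP => /=; lia.
rewrite Hz //; last exact/eqP.
by case: eqP => /=; lia.
Qed.

Lemma psi_facts h : h \in SB -> psi h \in SA /\ sp (psi h) = sp h.
Proof.
move=> Hh; have HE := psiE Hh.
case/B_facts: Hh => s [Hsp Hs Hs1 Hsn [HL1 Hz Hms H0 [Hsum Hreg Hlg]]].
have HK i : E (psi h) i = (if i == n + s then 0 else E h i) + (i == s).
  by rewrite HE /Kf Hsp.
have Hsm : smallestP (E (psi h)) s.
  split.
    by rewrite HK eqxx; case: eqP => [?|_] /=; lia.
  move=> j; rewrite HK; case: (eqVneq j s) => [->//|Hjs].
  rewrite addn0; case: eqP => [_|_ Hp] //; exact: Hs.2.
split; last by rewrite Hsp; exact: sp_eq.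
rewrite inE; apply/and3P; split.
- apply/partP; split.
    rewrite HK; case: eqP => [?|_]; first lia.
    by rewrite H0; case: eqP => /=; lia.
  pose H' := fun i : nat => if i == n + s then 0 else E h i.
  rewrite (eq_bigr (fun i : 'I_n.+1 => i * (H' i + (i == s :> nat)))); last by move=> i _; rewrite HK.
  have e1 i : H' i + (i == n + s :> nat) = E h i.
    by rewrite /H'; case: eqP => [->|_] /=; [rewrite HL1 | lia].
  have S1 : \sum_(i < (2*n).+1) i * (H' i + (i == n + s :> nat)) = \sum_(i < (2*n).+1) i * H' i + (n + s).
    rewrite (sum_D _ H' (fun i => (i == n + s :> nat))) sum_delta //; lia.
  have S2 : \sum_(i < (2*n).+1) i * (H' i + (i == n + s :> nat)) = 2 * n.
    by rewrite -[RHS]Hsum; apply: eq_bigr => i _; rewrite e1.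
  have S3 : \sum_(i < (2*n).+1) i * H' i = \sum_(i < n.+1) i * H' i.
    apply: sum_ext; first lia.
    move=> i Hi; rewrite /H'; case: eqP => // /eqP Hne; apply: Hz => //.
  have S4 : \sum_(i < n.+1) i * (H' i + (i == s :> nat)) = \sum_(i < n.+1) i * H' i + s.
    rewrite (sum_D _ H' (fun i => (i == s :> nat))) sum_delta //; lia.
  have T : \sum_(i < n.+1) i * H' i = n - s.
    apply/eqP; rewrite -(eqn_add2r (n + s)) -S3 -S1 S2; apply/eqP; lia.
  rewrite S4 T; lia.
- apply/regP => j; rewrite HK => Hj.
  case: (eqVneq j s) => [->|Hjs]; first exact: Hreg _ Hs.1.
  apply: Hreg; move: Hj; rewrite (negbTE Hjs) /=; case: eqP => //= _; lia.
- apply/salP; exists s; split => //.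
  by rewrite HK eqxx; case: eqP => [?|_] /=; lia.
Qed.

Lemma phi_psi h : h \in SB -> phi (psi h) = h.
Proof.
move=> Hh; have [_ Hsp'] := psi_facts Hh; have HE := psiE Hh.
case/B_facts: Hh => s [Hsp Hs Hs1 Hsn [HL1 Hz Hms H0 [Hsum Hreg Hlg]]].
apply: E_inj => i; rewrite phiE /Gf Hsp' HE /Kf Hsp.
case: eqP => [->|_]; first by rewrite HL1.
by rewrite addnK.
Qed.

Lemma psi_phi f : f \in SA -> psi (phi f) = f.
Proof.
move=> Hf; have Hsp' := phi_sp Hf; have HE := psiE (phi_in Hf).
case/A_facts: Hf => s [Hsp Hs Hs1 Hsn [HFs Hms H0 Hsum Hreg]].
apply: E_inj => i; rewrite HE /Kf Hsp' phiE /Gf Hsp.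
case: eqP => [->|_].
  rewrite E_out; last lia.
  by case: eqP => /=; lia.
case: eqP => [->|_] /=; lia.
Qed.

Lemma main_card : #|SA| = #|SB|.
Proof.
apply: (card_bij (f := phi) (g := psi)).
- by move=> f; exact: phi_in.
- by move=> h Hh; have [] := psi_facts Hh.
- by move=> f; exact: psi_phi.
- by move=> h; exact: phi_psi.
Qed.

End Main.

Theorem theorem5p5 (m l n : nat) :
  2 <= m -> 2 <= l -> 1 <= n -> l %| n ->
  a_ml 2 l n = b_lk l (2 * n) n /\
  a_ml m l n = a_mlk (m - 1) l (2 * n) n.
Proof.
move=> Hm Hl Hn Hln; split; last exact: (main_card Hm Hn Hln).
have -> : b_lk l (2*n) n = a_mlk (2 - 1) l (2*n) n.
  rewrite /a_mlk /b_lk; apply: eq_card => f; rewrite !inE.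
  case: (boolP (spread_eq n f)) => [Hsp|]; last by rewrite !andbF.
  have Hs1 : smallest_at_least (2 - 1) f.
    case/spreadP: Hsp => s [L [Hs _ _]]; apply/salP; exists s; split => //; exact: Hs.1.
  by rewrite Hs1 !andbT.
exact: (main_card (m := 2) (leqnn 2) Hn Hln).
Qed.
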